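(* Consider the joint caching and recommendation problem $$\max_{\mathbf X,\mathbf Y}\ \sum_{u=1}^{U}\sum_{i=1}^{N} y_i\Big[w_u^{\mathrm{rec}}\frac{x_{ui}}{R}+(1-w_u^{\mathrm{rec}})\,p_u^{\mathrm{pref}}(i)\Big]$$ subject to $\sum_i y_i\le C$, $\sum_i x_{ui}\le R$ for all $u$, and $x_{ui},y_i\in\{0,1\}$ for all $u,i$, where $1\le R\le C\le N$. Then the maximum is attained by caching a set $\mathbf Y^*$ of $C$ contents maximizing $\sum_i y_i\,\hat p_i$ (i.e. $C$ contents with largest $\hat p_i$) and, for each user $u$, recommending any $R$ contents among the cached ones ($x_{ui}=1$ only if $y_i=1$). In particular, the optimal caching decision is $$\mathbf Y^*\in\operatorname{argmax}_{\mathbf Y:\ \sum_i y_i\le C}\ \sum_i y_i\sum_u(1-w_u^{\mathrm{rec}})p_u^{\mathrm{pref}}(i).$$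
   Context: There are $N$ contents $\mathcal N=\{1,\dots,N\}$ and $U$ users $\mathcal U=\{1,\dots,U\}$. A base station has a cache of capacity $C$ contents and recommends at most $R\le C$ contents to each user. $y_i\in\{0,1\}$ indicates whether content $i$ is cached; $x_{ui}\in\{0,1\}$ indicates whether content $i$ is recommended to user $u$. For each user $u$, $p_u^{\mathrm{pref}}(\cdot)$ is a probability distribution on $\mathcal N$ (the request distribution without recommendations), and $w_u^{\mathrm{rec}}\in[0,1]$ is the probability that user $u$ accepts recommendations. The request probability of user $u$ for content $i$ is $p_u^{\mathrm{req}}(i)=w_u^{\mathrm{rec}}\,x_{ui}/R+(1-w_u^{\mathrm{rec}})p_u^{\mathrm{pref}}(i)$ (users choose uniformly among recommended contents). Define $\hat p_i:=\sum_u(1-w_u^{\mathrm{rec}})p_u^{\mathrm{pref}}(i)$. *)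

(* Defs.v *)
From mathcomp Require Import all_boot all_order all_algebra.
Set Implicit Arguments. Unset Strict Implicit. Unset Printing Implicit Defensive.
Import Order.TTheory GRing.Theory Num.Theory.
Local Open Scope ring_scope.

(* A caching decision is y : 'I_N -> bool
   (y i = true iff content i is cached); a recommendation decision is
   x : 'I_U -> 'I_N -> bool (x u i = true iff i is recommended to u). *)

Definition objective {K : realFieldType} (N U Rr : nat)
  (w : 'I_U -> K) (pref : 'I_U -> 'I_N -> K)
  (x : 'I_U -> 'I_N -> bool) (y : 'I_N -> bool) : K :=
  \sum_(u < U) \sum_(i < N)
     (y i)%:R * (w u * (x u i)%:R / Rr%:R + (1 - w u) * pref u i).

Definition feasible (N U Rr C : nat)
  (x : 'I_U -> 'I_N -> bool) (y : 'I_N -> bool) : Prop :=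
  ((\sum_(i < N) y i)%N <= C)%N /\ forall u : 'I_U, ((\sum_(i < N) x u i)%N <= Rr)%N.

Definition phat {K : realFieldType} (N U : nat)
  (w : 'I_U -> K) (pref : 'I_U -> 'I_N -> K) (i : 'I_N) : K :=
  \sum_(u < U) (1 - w u) * pref u i.

Definition cache_value {K : realFieldType} (N U : nat)
  (w : 'I_U -> K) (pref : 'I_U -> 'I_N -> K) (y : 'I_N -> bool) : K :=
  \sum_(i < N) (y i)%:R * phat w pref i.

(* Main.v *)
Require Import Defs.
From mathcomp Require Import all_boot all_order all_algebra.
Import Order.TTheory GRing.Theory Num.Theory.
Local Open Scope ring_scope.
From mathcomp Require Import ring lra zify.

Lemma sum_upd_true N (y : 'I_N -> bool) i : ~~ y i ->
  (\sum_(j < N) (y j || (j == i)) = (\sum_(j < N) y j).+1)%N.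
Proof.
move=> nyi; rewrite (bigD1 i) //= (bigD1 i (P:=predT)) //= eqxx orbT (negbTE nyi).
congr (_ + _)%N; apply: eq_bigr => j /negbTE ->; by rewrite orbF.
Qed.

Lemma sum_upd_false N (y : 'I_N -> bool) i : y i ->
  (\sum_(j < N) y j = (\sum_(j < N) (y j && (j != i))).+1)%N.
Proof.
move=> yi; rewrite (bigD1 i) //= (bigD1 i (P:=predT)) //= eqxx andbF yi.
congr (_ + _)%N; apply: eq_bigr => j ->; by rewrite andbT.
Qed.

Lemma grow N (y : 'I_N -> bool) k : (\sum_(i < N) y i <= k)%N -> (k <= N)%N ->
  exists y' : 'I_N -> bool, (\sum_(i < N) y' i)%N = k /\ forall i, y i -> y' i.
Proof.
move eq_d : (k - \sum_(i < N) y i)%N => d.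
elim: d y eq_d => [|d IH] y eq_d hle hkN.
  exists y; split => //; lia.
have [i nyi] : exists i, ~~ y i.
  case: (pickP (fun j => ~~ y j)) => [i nyi | H]; first by exists i.
  have HN : (\sum_(i < N) y i = N)%N.
    rewrite -[X in _ = X]card_ord -sum1_card; apply: eq_bigr => j _.
    by have := H j; case: (y j).
  lia.
have := @sum_upd_true N y i nyi => hs.
have [y' [h1 h2]] := IH (fun j => y j || (j == i)) ltac:(lia) ltac:(lia) hkN.
by exists y'; split => // j yj; apply: h2; rewrite yj.
Qed.

Lemma shrink N (y : 'I_N -> bool) k : (k <= \sum_(i < N) y i)%N ->
  exists y' : 'I_N -> bool, (\sum_(i < N) y' i)%N = k /\ forall i, y' i -> y i.
Proof.
move eq_d : (\sum_(i < N) y i - k)%N => d.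
elim: d y eq_d => [|d IH] y eq_d hle.
  exists y; split => //; lia.
have [i yi] : exists i, y i.
  case: (pickP (fun j => y j)) => [i yi | H]; first by exists i.
  have H0 : (\sum_(i < N) y i = 0)%N.
    by apply: big1 => j _; have := H j; case: (y j).
  lia.
have := @sum_upd_false N y i yi => hs.
have [y' [h1 h2]] := IH (fun j => y j && (j != i)) ltac:(lia) ltac:(lia).
by exists y'; split => // j /h2 /andP[].
Qed.

Section S.
Variables (K : realFieldType) (N U Rr : nat) (w : 'I_U -> K) (pref : 'I_U -> 'I_N -> K).
Hypothesis hRpos : (1 <= Rr)%N.
Hypothesis hw : forall u, 0 <= w u <= 1.
Hypothesis hpref0 : forall u i, 0 <= pref u i.

Definition Aterm (x : 'I_U -> 'I_N -> bool) (y : 'I_N -> bool) : K :=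
  \sum_(u < U) w u / Rr%:R * (\sum_(i < N) (y i && x u i))%N%:R.

Lemma objE (x : 'I_U -> 'I_N -> bool) (y : 'I_N -> bool) : objective Rr w pref x y = Aterm x y + cache_value w pref y.
Proof.
rewrite /objective /Aterm /cache_value /phat.
under eq_bigr => u _ do under eq_bigr => i _ do rewrite mulrDr.
under eq_bigr => u _ do rewrite big_split /=.
rewrite big_split /=; congr (_ + _).
  apply: eq_bigr => u _; rewrite natr_sum mulr_sumr; apply: eq_bigr => i _.
  by case: (y i); case: (x u i); rewrite /= ?mul0r ?mul1r ?mulr0 ?mulr1 ?mul0r // mulr0.
rewrite exchange_big /=; apply: eq_bigr => i _; rewrite mulr_sumr.
by apply: eq_bigr => u _; rewrite mulrA.
Qed.

Lemma A_le (x : 'I_U -> 'I_N -> bool) (y : 'I_N -> bool) : (forall u, (\sum_(i < N) x u i <= Rr)%N) -> Aterm x y <= \sum_(u < U) w u.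
Proof.
move=> hx; apply: ler_sum => u _.
have hR : 0 < Rr%:R :> K by rewrite ltr0n.
have hn : ((\sum_(i < N) (y i && x u i)) <= Rr)%N.
  apply: leq_trans (hx u); apply: leq_sum => i _; by case: (y i); case: (x u i).
have /andP[w0 _] := hw u.
rewrite mulrAC ler_pdivrMr // ler_wpM2l //.
by rewrite ler_nat.
Qed.

Lemma A_eq (x : 'I_U -> 'I_N -> bool) (y : 'I_N -> bool) : (forall u, (\sum_(i < N) x u i)%N = Rr) -> (forall u i, x u i -> y i) ->
  Aterm x y = \sum_(u < U) w u.
Proof.
move=> hx hxy; apply: eq_bigr => u _.
have -> : (\sum_(i < N) (y i && x u i) = Rr)%N.
  rewrite -(hx u); apply: eq_bigr => i _.
  by case E: (x u i); rewrite ?andbF // (hxy _ _ E).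
have hR : Rr%:R != 0 :> K by rewrite pnatr_eq0 -lt0n.
by rewrite mulrAC mulfK.
Qed.

Lemma phat_ge0 i : 0 <= phat w pref i.
Proof.
apply: sumr_ge0 => u _; apply: mulr_ge0 => //.
by have /andP[_ h] := hw u; rewrite subr_ge0.
Qed.

Lemma cv_mono (y y' : 'I_N -> bool) : (forall i, y i -> y' i) -> cache_value w pref y <= cache_value w pref y'.
Proof.
move=> h; apply: ler_sum => i _.
case E: (y i); first by rewrite (h _ E).
by rewrite mul0r mulr_ge0 ?phat_ge0.
Qed.
End S.


Theorem mainTheorem1 (K : realFieldType) (N U Rr C : nat)
  (w : 'I_U -> K) (pref : 'I_U -> 'I_N -> K)
  (hRpos : (1 <= Rr)%N) (hRC : (Rr <= C)%N) (hCN : (C <= N)%N)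
  (hw : forall u, 0 <= w u <= 1)
  (hpref0 : forall u i, 0 <= pref u i)
  (hpref1 : forall u, \sum_(i < N) pref u i = 1) :
  (* (1) caching C contents maximizing sum_i y_i \hat p_i and recommending
         to every user R cached contents is optimal *)
  (forall (xs : 'I_U -> 'I_N -> bool) (ys : 'I_N -> bool),
     (\sum_(i < N) ys i)%N = C ->
     (forall y : 'I_N -> bool, (\sum_(i < N) y i)%N = C ->
        cache_value w pref y <= cache_value w pref ys) ->
     (forall u, (\sum_(i < N) xs u i)%N = Rr) ->
     (forall u i, xs u i -> ys i) ->
     forall x y, feasible Rr C x y ->
       objective Rr w pref x y <= objective Rr w pref xs ys)
  /\
  (* (2) every optimal caching decision lies in
         argmax_{Y : sum_i y_i <= C} sum_i y_i \hat p_i *)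
  (forall (xo : 'I_U -> 'I_N -> bool) (yo : 'I_N -> bool),
     feasible Rr C xo yo ->
     (forall x y, feasible Rr C x y ->
        objective Rr w pref x y <= objective Rr w pref xo yo) ->
     forall y : 'I_N -> bool, ((\sum_(i < N) y i)%N <= C)%N ->
       cache_value w pref y <= cache_value w pref yo).
Proof.
split.
  move=> xs ys hys hmax hxs hxsys x y [hy hx].
  rewrite !objE.
  apply: lerD; first by rewrite (@A_eq K N U Rr w hRpos xs ys hxs hxsys); exact: A_le.
  have [y' [h1 h2]] := @grow N y C hy hCN.
  apply: le_trans (hmax _ h1); exact: (@cv_mono K N U w pref hw hpref0).
move=> xo yo [hyo hxo] hopt y hy.
have [y' [h1 h2]] := @grow N y C hy hCN.
have [z [hz1 hz2]] : exists z : 'I_N -> bool, (\sum_(i < N) z i)%N = Rr /\ forall i, z i -> y' i.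
  by apply: shrink; rewrite h1.
have hf : feasible Rr C (fun _ : 'I_U => z) y' by split; [rewrite h1 | move=> u; rewrite hz1].
have := hopt _ _ hf.
rewrite !objE (@A_eq K N U Rr w hRpos (fun _ : 'I_U => z) y' (fun _ => hz1) (fun _ => hz2)).
move=> H.
have HA := @A_le K N U Rr w hRpos hw xo yo hxo.
apply: le_trans (@cv_mono K N U w pref hw hpref0 y y' h2) _.
have H2 := le_trans H (lerD HA (lexx (cache_value w pref yo))).
by rewrite lerD2l in H2.
Qed.
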